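(* Let $F$ be a differential field with derivation $\partial$ whose field of constants is an algebraically closed field $C$ of characteristic zero, and let $l\ge1$. Let $A=A_\Delta+H+N\in\mathfrak{sl}_{l+1}(F)$ with $A_\Delta=\sum_{i=1}^{l}E_{i,i+1}$, $H$ diagonal of trace zero over $F$, and $N$ strictly lower triangular over $F$. Then there exists $U\in\mathcal{U}^-(F)$ such that $UAU^{-1}+\partial(U)U^{-1}=A_\Delta+N'$ for some strictly lower triangular matrix $N'$ over $F$.
   Context: $E_{ij}$ denotes the matrix unit with $1$ at $(i,j)$. $\mathcal{U}^-(F)$ denotes the group of lower triangular unipotent $(l+1)\times(l+1)$ matrices over $F$ (the unipotent radical of the lower triangular Borel subgroup of $\mathrm{SL}_{l+1}$). In root-theoretic terms: $A\in A_\Delta+\mathbf{H}(F)\oplus\bigoplus_{\delta\in\Phi^-}\mathrm{Lie}(\mathrm{SL}_{l+1})_\delta(F)$ is transformed into $A_\Delta+\bigoplus_{\delta\in\Phi^-}\mathrm{Lie}(\mathrm{SL}_{l+1})_\delta(F)$, where $\mathbf{H}$ is the diagonal Cartan subalgebra and $\Phi^-$ the negative roots of type $A_l$ with root spaces spanned by $E_{t+1,s}$, $s\le t$. *)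

(* Defs.v *)
From HB Require Import structures.
From mathcomp Require Import all_boot all_order all_algebra.
Set Implicit Arguments. Unset Strict Implicit. Unset Printing Implicit Defensive.
Import GRing.Theory.
Local Open Scope ring_scope.

Definition is_derivation (F : fieldType) (d : F -> F) : Prop :=
  (forall x y : F, d (x + y) = d x + d y) /\
  (forall x y : F, d (x * y) = d x * y + x * d y).

Definition is_constant (F : fieldType) (d : F -> F) (x : F) : Prop := d x = 0.

Definition constants_alg_closed (F : fieldType) (d : F -> F) : Prop :=
  forall p : {poly F}, (forall i, is_constant d p`_i) -> (1 < size p)%N ->
    exists x : F, is_constant d x /\ root p x.

(* Characteristic zero (of F, equivalently of its constant subfield). *)
Definition char_zero (F : fieldType) : Prop := [pchar F] =i pred0.

(* A_Delta = sum_{i=1}^{l} E_{i,i+1}: ones on the superdiagonal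
   (0-indexed: entry (i,j) is 1 iff j = i+1). *)
Definition A_Delta (F : fieldType) (n : nat) : 'M[F]_n :=
  \matrix_(i < n, j < n) (if (nat_of_ord j == (nat_of_ord i).+1)%N then 1 else 0).
Arguments A_Delta : clear implicits.

Definition is_diag_trace0 (F : fieldType) (n : nat) (H : 'M[F]_n) : Prop :=
  (forall i j : 'I_n, i != j -> H i j = 0) /\ \tr H = 0.

Definition strictly_lower (F : fieldType) (n : nat) (N : 'M[F]_n) : Prop :=
  forall i j : 'I_n, (nat_of_ord i <= nat_of_ord j)%N -> N i j = 0.

Definition lower_unipotent (F : fieldType) (n : nat) (U : 'M[F]_n) : Prop :=
  (forall i j : 'I_n, (nat_of_ord i < nat_of_ord j)%N -> U i j = 0) /\
  (forall i : 'I_n, U i i = 1).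

(* Main.v *)
Require Import Defs.
From HB Require Import structures.
From mathcomp Require Import all_boot all_order all_algebra.
From mathcomp Require Import zify.
Import GRing.Theory.
Local Open Scope ring_scope.

Lemma sum_ifnat (F : fieldType) n (m : nat) (g : 'I_n.+1 -> F) :
  \sum_(k < n.+1) (if (val k == m)%N then g k else 0) = if (m < n.+1)%N then g (inord m) else 0.
Proof.
case: ltnP => Hm.
- rewrite (bigD1 (inord m)) //= inordK // eqxx big1 ?addr0 // => k Hk.
  case: eqP => // Ek; move: Hk; by rewrite -val_eqE /= inordK // Ek eqxx.
- apply: big1 => k _; case: eqP => // Ek; have := ltn_ord k; by rewrite Ek ltnNge Hm.
Qed.

Theorem lemma11 (F : fieldType) (d : F -> F) (l : nat)
  (hd : is_derivation d) (hC : constants_alg_closed d) (h0 : char_zero F)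
  (hl : (1 <= l)%N) (H N : 'M[F]_(l.+1))
  (hH : is_diag_trace0 H) (hN : strictly_lower N) :
  exists U : 'M[F]_(l.+1), lower_unipotent U /\
    exists N' : 'M[F]_(l.+1), strictly_lower N' /\
      U *m (A_Delta F (l.+1) + H + N) *m invmx U + map_mx d U *m invmx U
        = A_Delta F (l.+1) + N'.
Proof.
have d1 : d 1 = 0.
  have e := hd.2 1 1; rewrite !mulr1 !mul1r in e.
  by apply: (addrI (d 1)); rewrite addr0 -e.
have d0 : d 0 = 0.
  have e := hd.1 0 0; rewrite !addr0 in e.
  by apply: (addrI (d 0)); rewrite addr0 -e.
pose t (m : nat) := \sum_(k < l.+1 | (val k < m)%N) H k k.
have tS : forall m, (m < l.+1)%N -> t m.+1 = t m + H (inord m) (inord m).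
  move=> m Hm; rewrite /t (bigD1 (inord m)) /= ?inordK ?ltnSn // addrC.
  congr (_ + _); apply: eq_bigl => k; rewrite ltnS -val_eqE /= inordK //.
  by rewrite ltn_neqAle andbC.
have tn : t l.+1 = 0.
  by rewrite /t -[RHS]hH.2 /mxtrace; apply: eq_bigl => k; rewrite ltn_ord.
have t0 : t 0 = 0 by rewrite /t big_pred0.
pose U := \matrix_(i < l.+1, j < l.+1)
  (if i == j then 1 else if (val i == (val j).+1)%N then t (val i) else 0).
have Uup : forall i j : 'I_l.+1, (i < j)%N -> U i j = 0.
  move=> i j hij; rewrite mxE; case: eqP => [E|_]; first by move: hij; rewrite E ltnn.
  case: eqP => // E; exfalso; move: hij E; case: i => [i ?]; case: j => [j ?] /=; lia.
have Udiag : forall i : 'I_l.+1, U i i = 1 by move=> i; rewrite mxE eqxx.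
have Uunit : U \in unitmx.
  rewrite unitmxE det_trig; last by apply/is_trig_mxP.
  by rewrite big1 ?unitr1 // => i _; rewrite Udiag.
pose V := invmx U.
have UV : U *m V = 1 := mulmxV Uunit.
have Vlow : forall i j : 'I_l.+1, (i < j)%N -> V i j = 0.
  suff: forall m (i j : 'I_l.+1), (i < m)%N -> (i < j)%N -> V i j = 0.
    by move=> h i j; apply: h (ltnSn i).
  elim=> [//|m IH] i j; rewrite ltnS leq_eqVlt => /orP[/eqP Ei|]; last exact: IH.
  move=> hij; have := congr1 (fun M : 'M[F]_l.+1 => M i j) UV; rewrite !mxE (bigD1 i) //=.
  rewrite Udiag mul1r big1 ?addr0.
    by move=> ->; case: eqP => // E; move: hij; rewrite E ltnn.
  move=> k hk; case: (ltnP i k) => hik; first by rewrite Uup // mul0r.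
  rewrite IH ?mulr0 //.
    by rewrite -Ei ltn_neqAle hik andbT; move: hk; rewrite -val_eqE.
  by apply: leq_ltn_trans hij.
pose A := A_Delta F l.+1 + H + N.
pose M := U *m A + map_mx d U - A_Delta F l.+1 *m U.
have Mlow : forall i j : 'I_l.+1, (i <= j)%N -> M i j = 0.
  move=> i j hij.
  rewrite /M !mxE.
  have Hne : (val i == (val j).+1) = false.
    by apply/negbTE; rewrite neq_ltn ltnS hij.
  rewrite Hne.
  have -> : d (if i == j then 1 else 0) = 0 by case: eqP => _; rewrite ?d1 ?d0.
  rewrite addr0.
  rewrite (eq_bigr (fun k : 'I_l.+1 => (if val k == val i then A k j else 0) +
     (if val k == (val i).-1 then (if (0 < val i)%N then t (val i) * A k j else 0) else 0))); last first.
    move=> k _; rewrite mxE -[i == k]val_eqE /=.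
    do ![case: ifP => ?]; rewrite ?mul1r ?mul0r ?addr0 ?add0r //. all: try (exfalso; lia).
  rewrite [X in _ - X](eq_bigr (fun k : 'I_l.+1 => if val k == (val i).+1 then U k j else 0)); last first.
    by move=> k _; rewrite /A_Delta [X in X * _]mxE; case: ifP; rewrite ?mul1r ?mul0r.
  rewrite big_split /= !sum_ifnat ltn_ord inord_val (leq_ltn_trans (leq_pred _) (ltn_ord i)).
  rewrite /A !mxE hN // addr0.
  have hpred : (i.-1 < l.+1)%N := leq_ltn_trans (leq_pred _) (ltn_ord i).
  rewrite (hN (inord i.-1) j); last by rewrite inordK //; apply: leq_trans hij; apply: leq_pred.
  rewrite addr0 !inordK // -val_eqE /=.
  have tSi : t (nat_of_ord i).+1 = t i + H i i by rewrite tS // inord_val.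
  have [Eij|Nij] := eqVneq i j.
    subst j.

    rewrite (@ltn_eqF i i.+1 (ltnSn _)) add0r.
    case: (posnP i) => hi0.
      rewrite hi0 /=.
      have -> : (1 < l.+1)%N by [].
      by rewrite inordK // eqxx /= addr0 -[1%N]/(0.+1) -hi0 tSi hi0 t0 add0r subrr.
    rewrite (prednK hi0) eqxx (hH.1 (inord i.-1) i); last first.
      by rewrite -val_eqE /= inordK // neq_ltn ltn_predL hi0.
    rewrite addr0 mulr1.
    case: (ltnP i.+1 l.+1) => hin.
      by rewrite inordK // (gtn_eqF (ltnSn _)) eqxx tSi addrC subrr.
    have E : (nat_of_ord i).+1 = l.+1 by apply/eqP; rewrite eqn_leq hin ltn_ord.
    by rewrite subr0 addrC -tSi E tn.
  have hlt : (i < j)%N by rewrite ltn_neqAle hij andbT; exact: Nij.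
  have hin : (i.+1 < l.+1)%N := leq_ltn_trans hlt (ltn_ord j).
  have hlt' : (i.+1 < j.+1)%N by rewrite ltnS.
  rewrite hin inordK // (hH.1 i j Nij) addr0 (ltn_eqF hlt').
  rewrite [(_.+1 == _)]eq_sym.
  have -> : (if (0 < i)%N
   then t i * ((if nat_of_ord j == i.-1.+1 then 1 else 0) + H (inord i.-1) j) else 0) = 0.
    case: (posnP i) => hi0 //.
    rewrite (prednK hi0) (gtn_eqF hlt) add0r (hH.1 (inord i.-1) j) ?mulr0 //.
    rewrite -val_eqE /= inordK // neq_ltn; apply/orP; left.
    by apply: leq_ltn_trans hlt; apply: leq_pred.
  by rewrite addr0; case: ifP; rewrite subrr.
exists U; split; first by split.
exists (M *m V); split.
  move=> i j hij; rewrite mxE big1 // => k _.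
  case: (ltnP k i) => hk; first by rewrite Vlow ?mulr0 // (leq_trans hk).
  by rewrite Mlow ?mul0r.
rewrite -mulmxDl.
have -> : U *m A + map_mx d U = M + A_Delta F l.+1 *m U by rewrite /M addrNK.
by rewrite mulmxDl -mulmxA UV mulmx1 addrC.
Qed.
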